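(* There exist $\Delta q>0$, $\mu\in\mathbb R$, $\sigma>0$ and $0\le a<b\le\infty$ such that, for $\Lambda$ distributed as $\mathcal N(\mu,\sigma^2)$ truncated to $[a,b]$, one has $e^{\epsilon_{N^T}}=\frac{\mathbb E(\Lambda)}{M'_\Lambda(-\Delta q)}<M_\Lambda(\Delta q)$.
   Context: The truncated Gaussian on $[a,b]$ has density $\frac{\phi((x-\mu)/\sigma)}{\sigma(\Phi(\frac{b-\mu}{\sigma})-\Phi(\frac{a-\mu}{\sigma}))}$ for $a\le x\le b$ and $0$ otherwise, with $\phi,\Phi$ the standard normal density and CDF. $M_\Lambda(t)=\mathbb E[e^{t\Lambda}]$ and $M'_\Lambda(t)=\mathbb E[\Lambda e^{t\Lambda}]$. *)

(* Defs.v *)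
From HB Require Import structures.
From mathcomp Require Import all_boot all_order all_algebra.
From mathcomp Require Import all_classical all_reals all_analysis.
Set Implicit Arguments. Unset Strict Implicit. Unset Printing Implicit Defensive.
Import Order.TTheory GRing.Theory Num.Theory.
Import numFieldNormedType.Exports.
Local Open Scope classical_set_scope.
Local Open Scope ring_scope.

Section TruncGauss.
Variable R : realType.

Definition std_phi (x : R) : R := expR (- (x ^+ 2) / 2) / Num.sqrt (2 * pi).

Definition std_Phi (t : R) : R :=
  \int[@lebesgue_measure R]_(x in `]-oo, t]) std_phi x.

Definition std_Phi_ext (t : \bar R) : R :=
  match t with
  | r%:E => std_Phi r
  | +oo%E => 1
  | -oo%E => 0
  end.

Definition trunc_support (a : R) (b : \bar R) : set R :=
  [set x : R | a <= x /\ (x%:E <= b)%E].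

(* Phi((b - mu)/sigma), with (+oo - mu)/sigma = +oo for sigma > 0 *)
Definition Phi_upper (mu sigma : R) (b : \bar R) : R :=
  match b with
  | r%:E => std_Phi ((r - mu) / sigma)
  | +oo%E => 1
  | -oo%E => 0
  end.

Definition trunc_gauss_pdf (mu sigma a : R) (b : \bar R) (x : R) : R :=
  if `[< trunc_support a b x >] then
    std_phi ((x - mu) / sigma) /
      (sigma * (Phi_upper mu sigma b - std_Phi ((a - mu) / sigma)))
  else 0.

Definition trunc_gauss_expect (mu sigma a : R) (b : \bar R) (g : R -> R) : R :=
  \int[@lebesgue_measure R]_(x in [set: R]) (g x * trunc_gauss_pdf mu sigma a b x).

Definition mgf (mu sigma a : R) (b : \bar R) (t : R) : R :=
  trunc_gauss_expect mu sigma a b (fun x => expR (t * x)).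
Definition mgf' (mu sigma a : R) (b : \bar R) (t : R) : R :=
  trunc_gauss_expect mu sigma a b (fun x => x * expR (t * x)).

End TruncGauss.

(* Main.v *)
Require Import Defs.
From HB Require Import structures.
From mathcomp Require Import all_boot all_order all_algebra.
From mathcomp Require Import all_classical all_reals all_analysis.
From mathcomp Require Import ring lra.
Import Order.TTheory GRing.Theory Num.Theory.
Import numFieldNormedType.Exports.
Local Open Scope classical_set_scope.
Local Open Scope ring_scope.

Section S.
Variable R : realType.
Notation mu := (@lebesgue_measure R).

Lemma phiE : @std_phi R = normal_pdf 0 1.
Proof.
apply/funext => x; rewrite /std_phi /normal_pdf oner_eq0 /normal_peak /normal_fun.
rewrite subr0 expr1n mul1r mulrC; congr (_ * _).
by rewrite mulr_natl.
Qed.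

Lemma phi_cont : continuous (@std_phi R).
Proof. by rewrite phiE; apply: continuous_normal_pdf; rewrite oner_eq0. Qed.

Lemma phi_int (D : set R) : measurable D -> mu.-integrable D (EFin \o @std_phi R).
Proof.
move=> mD; apply: (@integrableS _ _ _ _ setT) => //.
rewrite phiE; exact: integrable_normal_pdf.
Qed.

Lemma phi_ge0 x : 0 <= @std_phi R x.
Proof. by rewrite phiE normal_pdf_ge0. Qed.

Lemma cont_int (f : R -> R) (u v : R) : continuous f ->
  mu.-integrable `[u, v] (EFin \o f).
Proof.
move=> cf; apply: continuous_compact_integrable; first exact: segment_compact.
exact: continuous_subspaceT.
Qed.

Lemma Nval : Phi_upper 0 1 (2%:E) - std_Phi ((1 - 0) / 1) =
  \int[mu]_(x in `[1, 2]) std_phi x :> R.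
Proof.
rewrite /Phi_upper /std_Phi !subr0 !divr1.
rewrite Rintegral_itvB //.
- apply: Rintegral_itv_obnd_cbnd; by apply: phi_int.
- by apply: phi_int.
- by rewrite bnd_simp ler1n.
Qed.
Definition Nc := \int[mu]_(x in `[1, 2]) @std_phi R x.

Lemma expectE (g : R -> R) : continuous g ->
  trunc_gauss_expect 0 1 1 (2%:E) g =
  (\int[mu]_(x in `[1, 2]) (g x * std_phi x)) / Nc.
Proof.
move=> cg; rewrite /trunc_gauss_expect /trunc_gauss_pdf mul1r Nval -/Nc.
transitivity (\int[mu]_(x in [set: R]) ((fun x => g x * std_phi x / Nc) \_ `[1, 2]) x).
  apply: eq_Rintegral => x _; rewrite /patch subr0 divr1.
  case: asboolP => [[h1 h2]|h]; rewrite mem_setE in_itv /=.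
  - by rewrite h1 -lee_fin h2 mulrA.
  - case: ifPn => [/andP[h1 h2]|_]; last by rewrite mulr0.
    by exfalso; apply: h; split => //; rewrite lee_fin.
rewrite -Rintegral_mkcond RintegralZr //.
apply: cont_int => x; apply: cvgM; [exact: cg|exact: phi_cont].
Qed.

Lemma cst_int (c u v : R) : mu.-integrable `[u, v] (EFin \o (fun=> c)).
Proof. by apply: cont_int => x; exact: cvg_cst. Qed.

Lemma mu_itv (u v : R) : u <= v -> fine (mu `[u, v]) = v - u.
Proof.
move=> uv; rewrite lebesgue_measure_itv /=; case: ltP => [_|vu] /=.
  by [].
by move: vu; rewrite lee_fin => vu; apply/esym/eqP; rewrite subr_eq0 eq_le uv vu.
Qed.

Lemma int_lb (f : R -> R) (u v c : R) : continuous f -> u <= v ->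
  (forall x, u <= x <= v -> c <= f x) -> c * (v - u) <= \int[mu]_(x in `[u, v]) f x.
Proof.
move=> cf uv h; rewrite -mu_itv // -Rintegral_cst //.
apply: le_Rintegral => //; [exact: cst_int | exact: cont_int].
Qed.

Lemma int_ub (f : R -> R) (u v c : R) : continuous f -> u <= v ->
  (forall x, u <= x <= v -> f x <= c) -> \int[mu]_(x in `[u, v]) f x <= c * (v - u).
Proof.
move=> cf uv h; rewrite -mu_itv // -Rintegral_cst //.
apply: le_Rintegral => //; [exact: cont_int | exact: cst_int].
Qed.

Lemma int_sub (f : R -> R) (u v u' v' : R) : continuous f ->
  u <= u' -> v' <= v -> (forall x, u <= x <= v -> 0 <= f x) ->
  \int[mu]_(x in `[u', v']) f x <= \int[mu]_(x in `[u, v]) f x.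
Proof.
move=> cf uu vv h.
have i1 := @cont_int f u v cf.
have i2 := @cont_int f u' v' cf.
rewrite /Rintegral fine_le //.
- by apply: integrable_fin_num.
- by apply: integrable_fin_num.
apply: ge0_subset_integral => //.
- by case/integrableP: i1.
move=> x; rewrite /= !in_itv /= => /andP[h1 h2].
  by rewrite (le_trans uu h1) (le_trans h2 vv).
Qed.

Let s2pi := Num.sqrt (2 * pi : R).

Lemma s_ge1 : 1 <= s2pi.
Proof.
rewrite /s2pi -[X in X <= _]sqrtr1 ler_sqrt; last by rewrite mulr_ge0 // pi_ge0.
have := @pi_ge2 R; lra.
Qed.

Lemma s_le3 : s2pi <= 3.
Proof.
have -> : (3 : R) = Num.sqrt (3 ^+ 2) by rewrite sqrtr_sqr ger0_norm.
rewrite /s2pi ler_sqrt; last by rewrite sqr_ge0.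
have := @pihalf_lt2 R; lra.
Qed.

Lemma phi_le1 x : @std_phi R x <= 1.
Proof.
have s0 : 0 < s2pi by apply: lt_le_trans s_ge1.
rewrite /std_phi -/s2pi ler_pdivrMr // mul1r.
apply: le_trans s_ge1; rewrite expR_le1.
rewrite mulNr oppr_le0; apply: divr_ge0 => //; exact: sqr_ge0.
Qed.

Lemma phi_lb x : 1 <= x <= 2 -> expR (-2) / 3 <= @std_phi R x.
Proof.
move=> /andP[h1 h2].
have s0 : 0 < s2pi by apply: lt_le_trans s_ge1.
rewrite /std_phi -/s2pi ler_pdivlMr //.
have e1 : expR (-2) <= expR (- x ^+ 2 / 2 : R).
  rewrite ler_expR; nra.
have e0 := expR_ge0 (-2 : R).
have := s_le3; nra.
Qed.

Lemma cont_lin (k : R) : continuous (fun x : R => k * x).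
Proof. by move=> x; apply: cvgM; [exact: cvg_cst | exact: cvg_id]. Qed.

Lemma cont_exp (k : R) : continuous (fun x : R => expR (k * x)).
Proof.
move=> x; apply: (cvg_comp (fun x => k * x) expR); first exact: cont_lin.
exact: continuous_expR.
Qed.

Lemma cont_xexp (k : R) : continuous (fun x : R => x * expR (k * x)).
Proof. by move=> x; apply: cvgM; [exact: cvg_id | exact: cont_exp]. Qed.

Lemma cont_mulphi (g : R -> R) : continuous g -> continuous (fun x => g x * @std_phi R x).
Proof. by move=> cg x; apply: cvgM; [exact: cg | exact: phi_cont]. Qed.

Lemma n1 : (5 / 4 : R) <= 2. Proof. lra. Qed.
Lemma n2 : (1 : R) <= 5 / 4. Proof. lra. Qed.
Lemma n3 : (7 / 4 : R) <= 2. Proof. lra. Qed.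
Lemma n4 : (1 : R) <= 7 / 4. Proof. lra. Qed.
Lemma n5 : (1 : R) <= 2. Proof. lra. Qed.
Lemma lin1 (x : R) : x <= 5/4 -> -600 * (5/4) <= -600 * x. Proof. lra. Qed.
Lemma lin2 (x : R) : 7/4 <= x -> 600 * (7/4) <= 600 * x. Proof. lra. Qed.
Lemma ml1 (x K e : R) : 1 <= x -> 0 <= K -> K <= e -> K <= x * e. Proof. nra. Qed.
Lemma ml2 (x p : R) : 0 <= x -> x <= 2 -> 0 <= p -> p <= 1 -> x * p <= 2. Proof. nra. Qed.
Lemma fin (A B C N K L q E : R) : 0 < q -> 0 < K -> 0 < L -> q * (2 - 1) <= N -> N <= 1 * (2 - 1) ->
  A <= 2 * (2 - 1) -> 0 <= A -> K * q * (5/4 - 1) <= B -> L * q * (2 - 7/4) <= C ->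
  K * L * (q * q) = E / 9 -> 296 + 1 <= E -> A / N / (B / N) < C / N.
Proof.
move=> q0 K0 L0 hN1 hN2 hA A0 hB hC KL hE.
have N0 : 0 < N by lra.
have B0 : 0 < B by apply: lt_le_trans hB; rewrite !mulr_gt0 //; lra.
have -> : A / N / (B / N) = A / B.
  by field; apply/andP; split; apply: lt0r_neq0.
rewrite ltr_pdivrMr // mulrAC ltr_pdivlMr //.
have hBC : K * q * (5 / 4 - 1) * (L * q * (2 - 7 / 4)) <= C * B.
  rewrite mulrC; apply: ler_pM => //; apply: mulr_ge0; rewrite ?mulr_ge0 //; try lra.
have eq1 : K * q * (5 / 4 - 1) * (L * q * (2 - 7 / 4)) = K * L * (q * q) / 16 by field.
rewrite KL in eq1.
have : A * N <= 2 by nra.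
lra.
Qed.

Lemma KLlem : expR (-600 * (5 / 4)) * expR (600 * (7 / 4)) * (expR (-2) / 3 * (expR (-2) / 3))
  = expR 296 / 9 :> R.
Proof.
have -> : (expR (-2) / 3 * (expR (-2) / 3) : R) = expR (-2) * expR (-2) / 9 by field.
rewrite -expRD mulrA -expRD mulrA -expRD; congr (expR _ / _); lra.
Qed.

Lemma main_R : trunc_gauss_expect 0 1 1 (2%:E) id /
    mgf' 0 1 1 (2%:E) (- 600) < mgf 0 1 1 (2%:E) (600 : R).
Proof.
rewrite /mgf /mgf' (@expectE id); last by move=> x; exact: cvg_id.
rewrite (expectE _ (cont_xexp (-600))) (expectE _ (cont_exp 600)).
have [q Hq] : exists q : R, q = expR (-2) / 3 by eexists.
have q0 : 0 < q by rewrite Hq divr_gt0 // expR_gt0.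
have plb x : 1 <= x <= 2 -> q <= std_phi x by rewrite Hq; exact: phi_lb.
have hN1 : q * (2 - 1) <= Nc.
  apply: int_lb; [exact: phi_cont | exact: n5 | exact: plb].
have hN2 : Nc <= 1 * (2 - 1).
  apply: int_ub; [exact: phi_cont | exact: n5 | move=> x _; exact: phi_le1].
have hA : \int[mu]_(x in `[1, 2]) (x * std_phi x) <= 2 * (2 - 1).
  apply: int_ub; [apply: cont_mulphi => x; exact: cvg_id | exact: n5 |].
  move=> x /andP[h1 h2]; apply: ml2 => //; [exact: le_trans ler01 h1 | exact: phi_ge0 | exact: phi_le1].
have A0 : 0 <= \int[mu]_(x in `[1, 2]) (x * std_phi x).
  apply: Rintegral_ge0 => x; rewrite /= in_itv /= => /andP[h1 _].
  by rewrite mulr_ge0 ?phi_ge0 //; exact: le_trans ler01 h1.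
have [K HK] : exists K : R, K = expR (-600 * (5 / 4)) by eexists.
have [L HL] : exists L : R, L = expR (600 * (7 / 4)) by eexists.
have K0 : 0 < K by rewrite HK expR_gt0.
have L0 : 0 < L by rewrite HL expR_gt0.
have hB : K * q * (5 / 4 - 1) <= \int[mu]_(x in `[1, 2]) (x * expR (-600 * x) * std_phi x).
  apply: (@le_trans _ _ (\int[mu]_(x in `[1, 5 / 4]) (x * expR (-600 * x) * std_phi x))); last first.
    apply: int_sub.
    - by apply: cont_mulphi; exact: cont_xexp.
    - exact: lexx.
    - exact: n1.
    - move=> x /andP[h1 h2]; apply: mulr_ge0; last exact: phi_ge0.
      apply: mulr_ge0; [exact: le_trans ler01 h1 | exact: expR_ge0].
  apply: int_lb; [apply: cont_mulphi; exact: cont_xexp | exact: n2 |].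
  move=> x /andP[h1 h2].
  have e1 : K <= expR (-600 * x) by rewrite HK ler_expR; exact: lin1.
  have p1 : q <= std_phi x by apply: plb; rewrite h1 /=; exact: le_trans h2 n1.
  have e2 : K <= x * expR (-600 * x) := @ml1 _ _ _ h1 (ltW K0) e1.
  exact: ler_pM (ltW K0) (ltW q0) e2 p1.
have hC : L * q * (2 - 7 / 4) <= \int[mu]_(x in `[1, 2]) (expR (600 * x) * std_phi x).
  apply: (@le_trans _ _ (\int[mu]_(x in `[7 / 4, 2]) (expR (600 * x) * std_phi x))); last first.
    apply: int_sub.
    - by apply: cont_mulphi; exact: cont_exp.
    - exact: n4.
    - exact: lexx.
    - move=> x _; apply: mulr_ge0; [exact: expR_ge0 | exact: phi_ge0].
  apply: int_lb; [apply: cont_mulphi; exact: cont_exp | exact: n3 |].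
  move=> x /andP[h1 h2].
  have e1 : L <= expR (600 * x) by rewrite HL ler_expR; exact: lin2.
  have p1 : q <= std_phi x by apply: plb; rewrite h2 andbT; exact: le_trans n4 h1.
  exact: ler_pM (ltW L0) (ltW q0) e1 p1.
have KL : K * L * (q * q) = expR 296 / 9.
  rewrite HK HL Hq; exact: KLlem.
have E : 296 + 1 <= expR (296 : R) by rewrite addrC; exact: expR_ge1Dx.
eapply fin; [exact q0|exact K0|exact L0|exact hN1|exact hN2|exact hA|exact A0|exact hB|exact hC|exact KL|exact E].
Qed.
End S.

Close Scope classical_set_scope.

Theorem mainTheorem14 (R : realType) :
  exists (dq mu sigma a : R) (b : \bar R),
    [/\ 0 < dq, 0 < sigma, 0 <= a, (a%:E < b)%E &
      trunc_gauss_expect mu sigma a b id / mgf' mu sigma a b (- dq)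
        < mgf mu sigma a b dq].
Proof.
exists 600, 0, 1, 1, (2%:E); split.
- by rewrite ltr0n.
- exact: ltr01.
- exact: ler01.
- by rewrite lte_fin ltr1n.
- exact: main_R.
Qed.
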